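(* Let $\mathfrak S$ be a commutative semiring and let $\sigma_{\mathfrak S}$ be the set of all finitely generated proper ideals of $\mathfrak S$, endowed with the ideal topology. If $\sigma_{\mathfrak S}$ is quasi-compact, then $\sigma_{\mathfrak S}$ contains all maximal ideals of $\mathfrak S$ (i.e. every maximal ideal of $\mathfrak S$ is finitely generated).
   Context: A semiring $(\mathfrak S,+,0,\cdot,1)$ has $(\mathfrak S,+,0)$ a commutative monoid, $(\mathfrak S,\cdot,1)$ a monoid, $0r=r0=0$, and two-sided distributivity; all semirings are commutative. An ideal is a nonempty proper subset closed under addition and under multiplication by elements of $\mathfrak S$; maximal means not properly contained in another ideal. For an ideal $\mathfrak a$, $\mathfrak a^{\uparrow}=\{\mathfrak x\in\sigma_{\mathfrak S}\mid\mathfrak a\subseteq\mathfrak x\}$; the ideal topology on $\sigma_{\mathfrak S}$ has the sets $\mathfrak a^{\uparrow}$ ($\mathfrak a$ any ideal) as a subbasis of closed sets. Quasi-compact means every open cover has a finite subcover. *)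

(* Defs.v *)
From HB Require Import structures.
From mathcomp Require Import all_boot all_order all_algebra.
From mathcomp Require Import classical_sets.
Set Implicit Arguments. Unset Strict Implicit. Unset Printing Implicit Defensive.
Import GRing.Theory.
Local Open Scope classical_set_scope.
Local Open Scope ring_scope.

Section SemiringIdeals.
Variable S : comPzSemiRingType.

Definition is_ideal (a : set S) : Prop :=
  [/\ (exists x, a x), a <> [set: S],
      (forall x y, a x -> a y -> a (x + y)) &
      (forall r x, a x -> a (r * x))].

Definition fin_gen (a : set S) : Prop :=
  exists (n : nat) (g : 'I_n -> S),
    a = [set x | exists r : 'I_n -> S, x = \sum_(i < n) r i * g i].

Definition is_maximal_ideal (m : set S) : Prop :=
  is_ideal m /\ forall b, is_ideal b -> m `<=` b -> b = m.

Definition sigmaS : set (set S) := [set a | is_ideal a /\ fin_gen a].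

Definition up (a : set S) : set (set S) := [set x | sigmaS x /\ a `<=` x].

(* Ideal topology on sigma_S: the sets a^up (a any ideal) form a subbasis of
   closed sets; so the complements sigma_S \ a^up form a subbasis of opens. *)
Definition basic_open (U : set (set S)) : Prop :=
  exists (n : nat) (A : 'I_n -> set S),
    (forall i, is_ideal (A i)) /\
    U = [set x | sigmaS x /\ forall i, ~ up (A i) x].

Definition ideal_open (U : set (set S)) : Prop :=
  exists F : set (set (set S)),
    (forall B, F B -> basic_open B) /\ U = [set x | exists B, F B /\ B x].

Definition sigma_quasi_compact : Prop :=
  forall F : set (set (set S)),
    (forall U, F U -> ideal_open U) ->
    sigmaS `<=` [set x | exists U, F U /\ U x] ->
    exists (n : nat) (U : 'I_n -> set (set S)),
      (forall i, F (U i)) /\ sigmaS `<=` [set x | exists i, U i x].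

End SemiringIdeals.

(* Main.v *)
Require Import Defs.
From mathcomp Require Import all_boot all_order all_algebra.
From mathcomp Require Import classical_sets.
From mathcomp Require Import boolp.
Import GRing.Theory.
Local Open Scope classical_set_scope.
Local Open Scope ring_scope.

Theorem proposition3p6 (S : comPzSemiRingType) :
  sigma_quasi_compact S ->
  forall m : set S, is_maximal_ideal m -> sigmaS m.
Proof.
move=> qc m [[[x0 mx0] mT maddm mmulm] mmax].
have m0 : m 0 by rewrite -(mul0r x0); apply: mmulm.
apply: contrapT => nsm.
pose P (x : S) : set S := [set y | exists r, y = r * x].
pose F : set (set (set S)) := [set U | exists x, m x /\
   U = [set a | sigmaS a /\ forall i : 'I_1, ~ up (P x) a]].
have h1 : forall U, F U -> ideal_open U.
  move=> U [x [mx ->]]; exists [set [set a | sigmaS a /\ forall i : 'I_1, ~ up (P x) a]].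
  split; last first.
    by apply/seteqP; split => a /=; [move=> h; eexists; split; [reflexivity|]|move=> [B [-> h]]].
  move=> B -> ; exists 1%N, (fun _ => P x); split => // _.
  split.
  + by exists x; exists 1; rewrite mul1r.
  + move=> PT; apply: mT; apply/seteqP; split => // y _.
    have : P x y by rewrite PT.
    by move=> [r ->]; apply: mmulm.
  + by move=> _ _ [r ->] [s ->]; exists (r + s); rewrite mulrDl.
  + by move=> r _ [s ->]; exists (r * s); rewrite mulrA.
have h2 : @sigmaS S `<=` [set x | exists U, F U /\ U x].
  move=> a sa.
  have [x [mx nax]] : exists x, m x /\ ~ a x.
    apply: contrapT => h.
    have ma : m `<=` a.
      move=> y my; apply: contrapT => nay; apply: h; by exists y.
    by apply: nsm; rewrite -(mmax a sa.1 ma).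
  exists [set a | sigmaS a /\ forall i : 'I_1, ~ up (P x) a]; split.
    by exists x.
  split => // _ [_ hP]; apply: nax; apply: hP; exists 1; by rewrite mul1r.
have [n [U [hU hcov]]] := qc F h1 h2.
  pose g i := proj1_sig (cid (hU i)).
  have hg i : m (g i) /\ U i = [set a | sigmaS a /\ forall j : 'I_1, ~ up (P (g i)) a].
    by rewrite /g; case: (cid (hU i)).
  pose a := [set y | exists r : 'I_n -> S, y = \sum_(i < n) r i * g i].
  have am : a `<=` m.
    move=> y [r ->]; apply: (big_ind m) => // i _.
    by apply: mmulm; case: (hg i).
  have sa : sigmaS a.
    split; last by exists n, g.
    split.
    + exists 0, (fun _ => 0); rewrite big1 // => i _; by rewrite mul0r.
    + move=> aT; apply: mT; apply/seteqP; split => // y _; apply: am; by rewrite aT.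
    + move=> _ _ [r ->] [s ->]; exists (fun i => r i + s i).
      by rewrite -big_split /=; apply: eq_bigr => i _; rewrite mulrDl.
    + move=> t _ [r ->]; exists (fun i => t * r i).
      by rewrite mulr_sumr; apply: eq_bigr => i _; rewrite mulrA.
  have [i Ui] := hcov a sa.
  case: (hg i) => _ Ue; rewrite Ue in Ui; case: Ui => _ /(_ ord0); apply.
  split => // y [r ->].
  exists (fun j => if j == i then r else 0).
  rewrite (bigD1 i) //= eqxx big1 ?addr0 // => j /negbTE ->; by rewrite mul0r.
Qed.
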